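(* Let $G$ be a finite group, $A\subset G$, $K>0$, $l$ a positive integer with $\mathbb{P}_G(A^l)\le K\,\mathbb{P}_G(A^{l-1})$, and $\epsilon\in(0,1]$. Then $$AA^{-1}\subset\operatorname{LinBohr}(\operatorname{LSpec}(A^l,\epsilon),2\epsilon\sqrt{2K}).$$
   Context: $A^l$ is the $l$-fold product set ($A^0:=\{1_G\}$), $AA^{-1}=\{ab^{-1}:a,b\in A\}$, $\mathbb{P}_G(E)=|E|/|G|$. $\operatorname{Lin}(G)$ is the set of homomorphisms $G\to S^1$; for $B\subset G$, $\widehat{1_B}(\gamma):=\mathbb{E}_{x\in G}1_B(x)\gamma(x)$ and $\operatorname{LSpec}(B,\eta):=\{\gamma\in\operatorname{Lin}(G):|\widehat{1_B}(\gamma)|\ge\sqrt{1-\eta^2/2}\,\mathbb{P}_G(B)\}$. For $z\in S^1$, $\|z\|:=(2\pi)^{-1}|\operatorname{Arg}z|$ with $\operatorname{Arg}z\in(-\pi,\pi]$, and $\operatorname{LinBohr}(\Lambda,\delta):=\{x\in G:\|\gamma(x)\|\le\delta\ \forall\gamma\in\Lambda\}$. *)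

(* Defs.v *)
From HB Require Import structures.
From mathcomp Require Import all_boot all_order all_fingroup all_algebra.
From mathcomp Require Import reals trigo.
From mathcomp Require Import complex.
Set Implicit Arguments. Unset Strict Implicit. Unset Printing Implicit Defensive.
Import Order.TTheory GRing.Theory Num.Theory.
Local Open Scope ring_scope.

Section Defs.
Variable R : realType.
Variable gT : finGroupType.

Definition Arg (z : R[i]) : R :=
  if 0 <= complex.Im z then acos (complex.Re z / ComplexField.Normc.normc z)
  else - acos (complex.Re z / ComplexField.Normc.normc z).

Definition circ_norm (z : R[i]) : R := `|Arg z| / (2 * pi).

Definition is_Lin (g : gT -> R[i]) : Prop :=
  (forall x y : gT, g (x * y)%g = g x * g y) /\ (forall x, ComplexField.Normc.normc (g x) = 1).

Definition PG (E : {set gT}) : R := #|E|%:R / #|[set: gT]|%:R.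

Definition hat1 (B : {set gT}) (g : gT -> R[i]) : R[i] :=
  (#|[set: gT]|%:R)^-1 * \sum_(x : gT) (if x \in B then g x else 0).

Definition LSpec (B : {set gT}) (eta : R) (g : gT -> R[i]) : Prop :=
  is_Lin g /\ Num.sqrt (1 - eta ^+ 2 / 2) * PG B <= ComplexField.Normc.normc (hat1 B g).

Definition LinBohr (Lam : (gT -> R[i]) -> Prop) (delta : R) (x : gT) : Prop :=
  forall g, Lam g -> circ_norm (g x) <= delta.
End Defs.

(* Main.v *)
Require Import Defs.
From HB Require Import structures.
From mathcomp Require Import all_boot all_order all_fingroup all_algebra.
From mathcomp Require Import reals trigo.
From mathcomp Require Import complex.
From mathcomp Require Import all_classical all_reals all_analysis.
From mathcomp Require Import ring lra.
Import Order.TTheory GRing.Theory Num.Theory.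
Import numFieldNormedType.Exports.
Local Open Scope ring_scope.
Local Open Scope classical_set_scope.
Local Open Scope ring_scope.
Section Tr.
Variable R : realType.

Lemma cos_pi4 : cos (pi / 4 : R) ^+ 2 = 1/2 /\ 0 < cos (pi / 4 : R).
Proof.
have pig := @pi_ge2 R.
have h : cos ((pi / 4 : R) *+ 2) = 0.
  have -> : (pi / 4 : R) *+ 2 = pi / 2 by rewrite mulr2n; field.
  exact: cos_pihalf.
rewrite cos_mulr2n in h; split.
  rewrite mulr2n in h; lra.
apply: cos_gt0_pihalf; apply/andP; split; lra.
Qed.

Lemma sin_lb (x : R) : 0 <= x <= pi / 4 -> x / 2 <= sin x.
Proof.
move=> /andP[x0 xp].
have pig := @pi_ge2 R.
have [->|xpos] := eqVneq x 0; first by rewrite sin0 mul0r.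
have xgt : 0 < x by rewrite lt_def xpos x0.
have [] := @MVT R sin cos 0 x xgt (fun y _ => is_derive_sin y).
  by apply: derivable_within_continuous => z _; exact: derivable_sin.
move=> c /[!in_itv] /= /andP[c0 cx] E.
rewrite sin0 subr0 subr0 in E.
have cc : cos (pi/4) <= cos c.
  rewrite leNgt ltr_cos ?in_itv /=; last 2 first.
    apply/andP; split; lra.
    apply/andP; split; lra.
  rewrite -leNgt; lra.
have [h1 h2] := cos_pi4.
have k2 : 1/2 <= cos (pi/4 : R) by nra.
rewrite E; nra.
Qed.

Lemma sin_lb2 (s : R) : 0 <= s <= pi / 2 -> s / pi <= sin s.
Proof.
move=> /andP[s0 sp].
have pig := @pi_ge2 R.
have pi0 : 0 < pi :> R by lra.
have ip : pi^-1 <= 2^-1 :> R by rewrite lef_pV2 ?posrE //; lra.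
have ip0 : 0 < pi^-1 :> R by rewrite invr_gt0.
have [hs|hs] := leP s (pi/4).
  have h1 : s / 2 <= sin s by apply: sin_lb; apply/andP; split.
  by apply: le_trans h1; apply: ler_wpM2l.
have [c2 c0] := cos_pi4.
have s4 : sin (pi/4 : R) ^+ 2 = 1/2 by rewrite sin2cos2 c2; field.
have s40 : 0 < sin (pi/4 : R) by apply: sin_gt0_pihalf; apply/andP; split; lra.
have h : sin (pi/4) <= sin s.
  rewrite leNgt ltr_sin ?in_itv /=; last 2 first.
    apply/andP; split; lra.
    apply/andP; split; lra.
  rewrite -leNgt; lra.
have k2 : 1/2 <= sin (pi/4 : R) by nra.
have : s / pi <= 1/2.
  rewrite ler_pdivrMr //; lra.
lra.
Qed.

Lemma acos_bound (r : R) : -1 <= r <= 1 -> 2 * (acos r / (2 * pi)) ^+ 2 <= 1 - r.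
Proof.
move=> hr.
have pig := @pi_ge2 R.
have pi0 : 0 < pi :> R by lra.
have t0 := acos_ge0 hr; have tp := acos_lepi hr.
have rc : cos (acos r) = r by apply: acosK; rewrite in_itv.
set t := acos r in t0 tp rc *.
have ct : cos t = cos (t/2) ^+ 2 *+ 2 - 1.
  by rewrite -cos_mulr2n mulr2n -splitr.
have ss : sin (t/2) ^+ 2 = 1 - cos (t/2) ^+ 2 by rewrite sin2cos2.
have hs : (t / 2) / pi <= sin (t / 2).
  by apply: sin_lb2; apply/andP; split; lra.
have e : t / (2 * pi) = (t/2) / pi by field; lra.
rewrite e -rc ct mulr2n.
have h0 : 0 <= (t/2)/pi by rewrite divr_ge0 //; lra.
move: hs h0 ss; set u := (t/2)/pi; set v := sin (t/2); set c := cos (t/2).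
move=> hs h0 ss.
have : u * u <= v * v by apply: ler_pM.
rewrite !expr2 in ss *; lra.
Qed.
End Tr.
Section Comp.
Variable R : realType.
Local Notation Re := (@complex.Re R).
Local Notation Im := (@complex.Im R).
Local Notation normc := (@ComplexField.Normc.normc R).

Lemma ReM (z w : R[i]) : Re (z * w) = Re z * Re w - Im z * Im w.
Proof. by case: z => a b; case: w => c d. Qed.
Lemma ImM (z w : R[i]) : Im (z * w) = Re z * Im w + Im z * Re w.
Proof. by case: z => a b; case: w => c d. Qed.
Lemma ReD (z w : R[i]) : Re (z + w) = Re z + Re w.
Proof. by case: z => a b; case: w => c d. Qed.
Lemma ImD (z w : R[i]) : Im (z + w) = Im z + Im w.
Proof. by case: z => a b; case: w => c d. Qed.
Lemma normcE (z : R[i]) : normc z = Num.sqrt (Re z ^+ 2 + Im z ^+ 2).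
Proof. by case: z. Qed.
Lemma normc1E (z : R[i]) : normc z = 1 -> Re z ^+ 2 + Im z ^+ 2 = 1.
Proof.
rewrite normcE => h.
by rewrite -(@sqr_sqrtr _ (Re z ^+ 2 + Im z ^+ 2)) ?h ?expr1n // addr_ge0 // sqr_ge0.
Qed.
Lemma normc_nat n : normc (n%:R) = n%:R.
Proof. by rewrite -[n%:R]/((1 : R[i]) *+ n) complex.normcMn ComplexField.Normc.normc1. Qed.
End Comp.

Theorem proposition8p1 (R : realType) (gT : finGroupType) (A : {set gT})
  (K : R) (l : nat) (eps : R) :
  0 < K -> (0 < l)%N ->
  PG R (A ^+ l)%g <= K * PG R (A ^+ l.-1)%g ->
  0 < eps <= 1 ->
  forall x : gT, x \in (A * A^-1)%g ->
    LinBohr (LSpec (A ^+ l)%g eps) (2 * eps * Num.sqrt (2 * K)) x.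
Proof.
move=> K0 l0 hPG /andP[e0 e1] x /mulsgP[a0 b1 a0A b1A ->] g [[hom hn] hspec].
rewrite mem_invg in b1A; set b0 := (b1^-1)%g in b1A.
case: l l0 hPG hspec => // l' _; rewrite /= expgS.
set C := (A ^+ l')%g => hPG hspec.
set B := (A * C)%g in hPG hspec.
pose re y := complex.Re (g y); pose im y := complex.Im (g y).
have nrm y : re y ^+ 2 + im y ^+ 2 = 1 by apply: normc1E.
have reM y z : re (y * z)%g = re y * re z - im y * im z by rewrite /re hom ReM.
have imM y z : im (y * z)%g = re y * im z + im y * re z by rewrite /im hom ImM.
have CB y : y \in C -> forall a, a \in A -> (a * y)%g \in B.
  by move=> yC a aA; apply: mem_mulg.
have Cpos : (0 < #|C|)%N.
  apply/card_gt0P; exists (a0 ^+ l')%g; rewrite /C.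
  elim: (l') => [|k IH]; first by rewrite !expg0 set11.
  by rewrite !expgS; apply: mem_mulg.
have Bpos : (0 < #|B|)%N.
  move/card_gt0P: Cpos => [y yC]; apply/card_gt0P; exists (a0 * y)%g; exact: CB.
set n : R := #|[set: gT]%SET|%:R.
have n0 : 0 < n by rewrite ltr0n; apply/card_gt0P; exists 1%g; rewrite !inE.
set N : R := #|B|%:R.
set M : R := #|C|%:R.
have N0 : 0 < N by rewrite ltr0n.
have M0 : 0 < M by rewrite ltr0n.
have NKM : N <= K * M.
  by move: hPG; rewrite /PG -/n -/N -/M mulrA ler_pM2r ?invr_gt0.
set P := \sum_(y in B) re y.
set Q := \sum_(y in B) im y.
set c := Num.sqrt (1 - eps ^+ 2 / 2).
have c0 : 0 <= c by apply: sqrtr_ge0.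
have c2 : c ^+ 2 = 1 - eps ^+ 2 / 2 by rewrite sqr_sqrtr //; nra.
have hS : Normc.normc (hat1 B g) = n^-1 * Num.sqrt (P ^+ 2 + Q ^+ 2).
  rewrite /hat1 ComplexField.Normc.normcM ComplexField.Normc.normcV normc_nat -big_mkcond normcE.
  rewrite (big_morph _ (@ReD R) (erefl _)) (big_morph _ (@ImD R) (erefl _)).
  by [].
have step1 : c * N <= Num.sqrt (P ^+ 2 + Q ^+ 2).
  move: hspec; rewrite hS /PG -/N -/n -/c mulrA [n^-1 * _]mulrC ler_pM2r //.
  by rewrite invr_gt0.
have sq0 : 0 <= P ^+ 2 + Q ^+ 2 by rewrite addr_ge0 // sqr_ge0.
have step2 : (c * N) ^+ 2 <= P ^+ 2 + Q ^+ 2.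
  rewrite -(sqr_sqrtr sq0) ler_sqr ?nnegrE ?sqrtr_ge0 ?mulr_ge0 //; exact: ltW.
pose E y := (N * re y - P) ^+ 2 + (N * im y - Q) ^+ 2.
have E0 y : 0 <= E y by rewrite addr_ge0 // sqr_ge0.
have V : \sum_(y in B) E y = N ^+ 3 - N * (P ^+ 2 + Q ^+ 2).
  have -> : \sum_(y in B) E y = \sum_(y in B) ((N ^+ 2 + (P ^+ 2 + Q ^+ 2)) - ((2 * N * P) * re y + (2 * N * Q) * im y)).
    apply: eq_bigr => y _; rewrite /E.
    have h2 : N ^+ 2 * re y ^+ 2 + N ^+ 2 * im y ^+ 2 = N ^+ 2 by rewrite -mulrDr nrm mulr1.
    rewrite !sqrrB !exprMn; lra.
  rewrite sumrB !big_split /= !sumr_const -!mulr_sumr -/P -/Q -mulrnDl -mulr_natr -/N.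
  ring.
have step3 : \sum_(y in B) E y <= N ^+ 3 * (eps ^+ 2 / 2).
  rewrite V; move: step2; rewrite exprMn c2 => step2.
  have : N * ((1 - eps ^+ 2 / 2) * N ^+ 2) <= N * (P ^+ 2 + Q ^+ 2) by rewrite ler_pM2l.
  move=> h; rewrite -[N ^+ 3]/(N * (N * N)) !expr2 in h *.
  lra.
pose d := (re a0 - re b0) ^+ 2 + (im a0 - im b0) ^+ 2.
have pt y : N ^+ 2 * d <= 2 * (E (a0 * y)%g + E (b0 * y)%g).
  rewrite /E !reM !imM.
  have h := nrm y.
  set X1 := N * (re a0 * re y - im a0 * im y).
  set X2 := N * (re b0 * re y - im b0 * im y).
  set Y1 := N * (re a0 * im y + im a0 * re y).
  set Y2 := N * (re b0 * im y + im b0 * re y).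
  have id : N ^+ 2 * d = (X1 - X2) ^+ 2 + (Y1 - Y2) ^+ 2.
    by rewrite -[LHS]mulr1 -h /d /X1 /X2 /Y1 /Y2; ring.
  rewrite id.
  have := sqr_ge0 (X1 + X2 - 2 * P); have := sqr_ge0 (Y1 + Y2 - 2 * Q).
  rewrite !expr2; nra.
have gen a : a \in A -> \sum_(y in C) E (a * y)%g <= \sum_(y in B) E y.
  move=> aA; rewrite [in X in _ <= X](reindex_inj (mulgI a)) /=.
  rewrite big_mkcond [X in _ <= X]big_mkcond /=; apply: ler_sum => y _.
  case: ifP => yC; first by rewrite CB.
  by case: ifP.
have S : \sum_(y in C) (N ^+ 2 * d) <= \sum_(y in C) (2 * (E (a0 * y)%g + E (b0 * y)%g)).
  by apply: ler_sum => y _; exact: pt.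
rewrite sumr_const -mulr_sumr big_split /= -mulr_natr -/M in S.
have := gen _ a0A; have := gen _ b1A.
move=> g1 g2.
have T : (d * M) * N ^+ 2 <= (2 * N * eps ^+ 2) * N ^+ 2.
  have e3 : N ^+ 3 = N * N ^+ 2 by rewrite exprS.
  rewrite e3 in step3.
  move: S; rewrite -!/(E _) => S.
  lra.
rewrite ler_pM2r ?exprn_gt0 // in T.
have hd : d <= 2 * K * eps ^+ 2.
  have T2 : d * M <= (2 * K * eps ^+ 2) * M.
    apply: (le_trans T); have := sqr_ge0 eps; nra.
  by rewrite ler_pM2r in T2.
have g1e : g 1%g = 1.
  have nz : g 1%g != 0.
    apply/eqP => h; have := hn 1%g; rewrite h ComplexField.Normc.normc0 => /eqP.
    by rewrite eq_sym oner_eq0.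
  by apply: (mulIf nz); rewrite mul1r -hom mulg1.
have hb1 : re b0 * re b1 - im b0 * im b1 = 1.
  by rewrite -reM /b0 mulVg /re g1e.
have hb2 : re b0 * im b1 + im b0 * re b1 = 0.
  by rewrite -imM /b0 mulVg /im g1e.
have hp : re b1 = re b0.
  have e : re b1 * (re b0 ^+ 2 + im b0 ^+ 2) = re b0 * (re b0 * re b1 - im b0 * im b1) + im b0 * (re b0 * im b1 + im b0 * re b1) by ring.
  by rewrite nrm mulr1 hb1 hb2 mulr1 mulr0 addr0 in e.
have hq : im b1 = - im b0.
  have e : im b1 * (re b0 ^+ 2 + im b0 ^+ 2) = - im b0 * (re b0 * re b1 - im b0 * im b1) + re b0 * (re b0 * im b1 + im b0 * re b1) by ring.
  by rewrite nrm mulr1 hb1 hb2 mulr1 mulr0 addr0 in e.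
have zre : re (a0 * b1)%g = re a0 * re b0 + im a0 * im b0.
  by rewrite reM hp hq; ring.
have zn1 := nrm (a0 * b1)%g.
have hd2 : 1 - re (a0 * b1)%g = d / 2.
  have h1 := nrm a0; have h2 := nrm b0.
  rewrite zre /d.
  have -> : (re a0 - re b0) ^+ 2 + (im a0 - im b0) ^+ 2 = (re a0 ^+ 2 + im a0 ^+ 2) + (re b0 ^+ 2 + im b0 ^+ 2) - 2 * (re a0 * re b0 + im a0 * im b0) by ring.
  by rewrite h1 h2; field.
have hr : -1 <= re (a0 * b1)%g <= 1.
  by apply/andP; split; nra.
rewrite /circ_norm /Arg hn divr1.
set r := complex.Re (g _).
have er : r = re (a0 * b1)%g by [].
rewrite er.
have circ : `|(if 0 <= complex.Im (g (a0 * b1)%g) then acos (re (a0 * b1)%g) else - acos (re (a0 * b1)%g))| = acos (re (a0 * b1)%g).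
  case: ifP => _; rewrite ?normrN ger0_norm //; exact: acos_ge0.
rewrite circ.
have hab := @acos_bound R _ hr.
have X0 : 0 <= acos (re (a0 * b1)%g) / (2 * pi).
  by rewrite divr_ge0 ?acos_ge0 // mulr_ge0 // pi_ge0.
have Y0 : 0 <= 2 * eps * Num.sqrt (2 * K).
  by rewrite mulr_ge0 ?sqrtr_ge0 // mulr_ge0 //; lra.
move: hab X0 Y0; set X := acos _ / _ => hab X0 Y0.
rewrite -ler_sqr ?nnegrE //.
have -> : (2 * eps * Num.sqrt (2 * K)) ^+ 2 = 8 * (K * (eps * eps)).
  rewrite !exprMn sqr_sqrtr; last lra.
  rewrite !expr2; ring.
rewrite hd2 in hab.
have ke : 0 <= K * (eps * eps) by rewrite mulr_ge0 ?mulr_ge0 //; lra.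
rewrite !expr2 in hab hd *.
lra.
Qed.
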